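(* Let $\mathcal C$ have a right duality, let $(A,m,\eta,\Delta,\epsilon)$ be a Frobenius algebra in $\mathcal C$ with an $A$-swap $(\tilde c_X)_X$, and assume $A$ is swap-commutative. Then the morphism $\Phi:=(\epsilon\otimes\mathrm{id}_{A^\vee})\circ(m\otimes\mathrm{id}_{A^\vee})\circ(\mathrm{id}_A\otimes b_A)$ lies in $\mathrm{Hom}_A(A,A^\vee)$, where $A=(A,m)$ and $A^\vee$ is the dual module of $A$, and $\Phi$ is an isomorphism of $A$-modules. Thus $A$ is self-dual as an $A$-module.
   Context: Throughout, $\mathcal C$ is a strict tensor (monoidal) category with tensor unit $I$ which is abelian and whose tensor product of morphisms is $k$-additive in each factor, where $k:=\mathrm{Hom}(I,I)$ is the (commutative) ground ring. An algebra in $\mathcal C$ is a triple $(A,m,\eta)$ with $A$ an object, $m\in\mathrm{Hom}(A\otimes A,A)$, $\eta\in\mathrm{Hom}(I,A)$, such that $m\circ(\mathrm{id}_A\otimes m)=m\circ(m\otimes\mathrm{id}_A)$ and $m\circ(\mathrm{id}_A\otimes\eta)=\mathrm{id}_A=m\circ(\eta\otimes\mathrm{id}_A)$. A coalgebra is a triple $(A,\Delta,\epsilon)$ with $\Delta\in\mathrm{Hom}(A,A\otimes A)$, $\epsilon\in\mathrm{Hom}(A,I)$, $(\Delta\otimes\mathrm{id}_A)\circ\Delta=(\mathrm{id}_A\otimes\Delta)\circ\Delta$ and $(\mathrm{id}_A\otimes\epsilon)\circ\Delta=\mathrm{id}_A=(\epsilon\otimes\mathrm{id}_A)\circ\Delta$.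 A Frobenius algebra is a quintuple $(A,m,\eta,\Delta,\epsilon)$ such that $(A,m,\eta)$ is an algebra, $(A,\Delta,\epsilon)$ a coalgebra, and $(\mathrm{id}_A\otimes m)\circ(\Delta\otimes\mathrm{id}_A)=\Delta\circ m=(m\otimes\mathrm{id}_A)\circ(\mathrm{id}_A\otimes\Delta)$. A (left) $A$-module is a pair $M=(\dot M,\rho_M)$ with $\rho_M\in\mathrm{Hom}(A\otimes\dot M,\dot M)$, $\rho_M\circ(m\otimes\mathrm{id}_{\dot M})=\rho_M\circ(\mathrm{id}_A\otimes\rho_M)$, $\rho_M\circ(\eta\otimes\mathrm{id}_{\dot M})=\mathrm{id}_{\dot M}$; $\mathrm{Hom}_A(M,N):=\{f\in\mathrm{Hom}(\dot M,\dot N)\mid f\circ\rho_M=\rho_N\circ(\mathrm{id}_A\otimes f)\}$. A right duality assigns to each object $X$ an object $X^\vee$ and morphisms $b_X\in\mathrm{Hom}(I,X\otimes X^\vee)$, $d_X\in\mathrm{Hom}(X^\vee\otimes X,I)$ with $(\mathrm{id}_X\otimes d_X)\circ(b_X\otimes\mathrm{id}_X)=\mathrm{id}_X$ and $(d_X\otimes\mathrm{id}_{X^\vee})\circ(\mathrm{id}_{X^\vee}\otimes b_X)=\mathrm{id}_{X^\vee}$. An $A$-swap is a family of isomorphisms $\tilde c_X\in\mathrm{Hom}(X\otimes A,A\otimes X)$, one for each object $X$, such that for all objects $X,Y$: $(m\otimes\mathrm{id}_X)\circ(\mathrm{id}_A\otimes\tilde c_X)\circ(\tilde c_X\otimes\mathrm{id}_A)=\tilde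 c_X\circ(\mathrm{id}_X\otimes m)$, $\tilde c_X\circ(\mathrm{id}_X\otimes\eta)=\eta\otimes\mathrm{id}_X$, $\tilde c_{X\otimes Y}=(\tilde c_X\otimes\mathrm{id}_Y)\circ(\mathrm{id}_X\otimes\tilde c_Y)$, and $\tilde c_Y\circ(f\otimes g)=(g\otimes f)\circ\tilde c_X$ for all $f\in\mathrm{Hom}(X,Y)$, $g\in\mathrm{Hom}(A,A)$. The algebra $A$ is swap-commutative if $m\circ\tilde c_A=m$. Dual module: for a left $A$-module $M$, $M^\vee:=(\dot M^\vee,\rho_M^\wedge)$ with $\rho_M^\wedge:=(d_{\dot M}\otimes\mathrm{id}_{\dot M^\vee})\circ(\mathrm{id}_{\dot M^\vee}\otimes\rho_M\otimes\mathrm{id}_{\dot M^\vee})\circ((\tilde c_{\dot M^\vee})^{-1}\otimes b_{\dot M})\in\mathrm{Hom}(A\otimes\dot M^\vee,\dot M^\vee)$; this is a left $A$-module. *)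

(* Defs.v *)
From HB Require Import structures.
From mathcomp Require Import all_boot all_algebra.
Set Implicit Arguments. Unset Strict Implicit. Unset Printing Implicit Defensive.
Import GRing.Theory.
Local Open Scope ring_scope.

Record stcat := STCat {
  Ob :> Type;
  HomC : Ob -> Ob -> zmodType;
  compm : forall X Y Z : Ob, HomC Y Z -> HomC X Y -> HomC X Z;
  idm : forall X : Ob, HomC X X;
  tens : Ob -> Ob -> Ob;
  tensm : forall X X' Y Y' : Ob, HomC X X' -> HomC Y Y' -> HomC (tens X Y) (tens X' Y');
  tunit : Ob;
  tensA : forall X Y Z : Ob, tens (tens X Y) Z = tens X (tens Y Z);
  tens1l : forall X : Ob, tens tunit X = X;
  tens1r : forall X : Ob, tens X tunit = X
}.
Arguments HomC : clear implicits.
Arguments compm {s X Y Z}.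
Arguments idm {s}.
Arguments tens {s}.
Arguments tensm {s X X' Y Y'}.
Arguments tunit {s}.
Arguments tensA {s}.
Arguments tens1l {s}.
Arguments tens1r {s}.

Declare Scope cat_scope.
Delimit Scope cat_scope with cat.
Notation "g ∘ f" := (compm g f) (at level 40, left associativity) : cat_scope.
Notation "f ⊗ g" := (tensm f g) (at level 35, no associativity) : cat_scope.
Local Open Scope cat_scope.

(* The identity morphism transported along an equality of objects: this is how
   the (identity) strictness isomorphisms X⊗(Y⊗Z) = (X⊗Y)⊗Z etc. are written. *)
Definition eqHom (C : stcat) (X Y : Ob C) (e : X = Y) : HomC C X Y :=
  match e in _ = Y' return HomC C X Y' with erefl => idm X end.
Arguments eqHom {C X Y}.

Definition is_stcat (C : stcat) : Prop :=
  [/\ (forall (X Y Z W : C) (h : HomC C Z W) (g : HomC C Y Z) (f : HomC C X Y),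
        h ∘ (g ∘ f) = (h ∘ g) ∘ f)
    /\ (forall (X Y : C) (f : HomC C X Y), idm Y ∘ f = f /\ f ∘ idm X = f),
      (forall (X Y Z X' Y' Z' : C) (f : HomC C X Y) (g : HomC C Y Z)
              (f' : HomC C X' Y') (g' : HomC C Y' Z'),
        (g ∘ f) ⊗ (g' ∘ f') = (g ⊗ g') ∘ (f ⊗ f')),
      (forall X Y : C, idm X ⊗ idm Y = idm (tens X Y)),
      (forall (X X' Y Y' Z Z' : C) (f : HomC C X X') (g : HomC C Y Y') (h : HomC C Z Z'),
        eqHom (tensA X' Y' Z') ∘ ((f ⊗ g) ⊗ h) = (f ⊗ (g ⊗ h)) ∘ eqHom (tensA X Y Z))
    & (forall (X Y : C) (f : HomC C X Y),
        eqHom (tens1l Y) ∘ (idm tunit ⊗ f) = f ∘ eqHom (tens1l X)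
        /\ eqHom (tens1r Y) ∘ (f ⊗ idm tunit) = f ∘ eqHom (tens1r X))
      /\
      (forall (X Y Z : C) (f f' : HomC C Y Z) (g g' : HomC C X Y),
        (f + f') ∘ g = f ∘ g + f' ∘ g /\ f ∘ (g + g') = f ∘ g + f ∘ g')
      /\ (forall (X Y X' Y' : C) (f f' : HomC C X X') (g g' : HomC C Y Y'),
        (f + f') ⊗ g = f ⊗ g + f' ⊗ g /\ f ⊗ (g + g') = f ⊗ g + f ⊗ g')].

Definition is_mono (C : stcat) (X Y : C) (f : HomC C X Y) : Prop :=
  forall (W : C) (g h : HomC C W X), f ∘ g = f ∘ h -> g = h.
Definition is_epi (C : stcat) (X Y : C) (f : HomC C X Y) : Prop :=
  forall (W : C) (g h : HomC C Y W), g ∘ f = h ∘ f -> g = h.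

Definition is_kernel (C : stcat) (X Y K : C) (f : HomC C X Y) (k : HomC C K X) : Prop :=
  f ∘ k = 0 /\
  forall (W : C) (g : HomC C W X), f ∘ g = 0 ->
    exists u : HomC C W K, k ∘ u = g /\ forall u' : HomC C W K, k ∘ u' = g -> u' = u.

Definition is_cokernel (C : stcat) (X Y Q : C) (f : HomC C X Y) (q : HomC C Y Q) : Prop :=
  q ∘ f = 0 /\
  forall (W : C) (g : HomC C Y W), g ∘ f = 0 ->
    exists u : HomC C Q W, u ∘ q = g /\ forall u' : HomC C Q W, u' ∘ q = g -> u' = u.

Definition is_abelian (C : stcat) : Prop :=
  [/\ (exists Z : C, forall X : C,
         (forall f g : HomC C Z X, f = g) /\ (forall f g : HomC C X Z, f = g)),
      (forall X1 X2 : C, exists (P : C) (i1 : HomC C X1 P) (i2 : HomC C X2 P)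
                                (p1 : HomC C P X1) (p2 : HomC C P X2),
         [/\ p1 ∘ i1 = idm X1, p2 ∘ i2 = idm X2, p1 ∘ i2 = 0, p2 ∘ i1 = 0
           & i1 ∘ p1 + i2 ∘ p2 = idm P]),
      (forall (X Y : C) (f : HomC C X Y), exists (K : C) (k : HomC C K X), is_kernel f k)
    & (forall (X Y : C) (f : HomC C X Y), exists (Q : C) (q : HomC C Y Q), is_cokernel f q)
      /\
      (forall (X Y : C) (f : HomC C X Y), is_mono f ->
         exists (Z : C) (g : HomC C Y Z), is_kernel g f)
      /\ (forall (X Y : C) (f : HomC C X Y), is_epi f ->
         exists (Z : C) (g : HomC C Z X), is_cokernel g f)].

Definition kscale (C : stcat) (X Y : C) (lam : HomC C tunit tunit) (f : HomC C X Y) : HomC C X Y :=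
  eqHom (tens1l Y) ∘ (lam ⊗ f) ∘ eqHom (esym (tens1l X)).

Definition tensor_k_additive (C : stcat) : Prop :=
  forall (X X' Y Y' : C) (lam : HomC C tunit tunit) (f : HomC C X X') (g : HomC C Y Y'),
    kscale lam f ⊗ g = kscale lam (f ⊗ g) /\ f ⊗ kscale lam g = kscale lam (f ⊗ g).

Record rduality (C : stcat) := RDuality {
  dualo : C -> C;
  coev : forall X : C, HomC C tunit (tens X (dualo X));
  ev : forall X : C, HomC C (tens (dualo X) X) tunit
}.
Arguments dualo {C}.
Arguments coev {C}.
Arguments ev {C}.

Definition is_rduality (C : stcat) (D : rduality C) : Prop :=
  forall X : C,
    eqHom (tens1r X) ∘ (idm X ⊗ ev D X) ∘ eqHom (tensA X (dualo D X) X)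
      ∘ (coev D X ⊗ idm X) ∘ eqHom (esym (tens1l X)) = idm X
    /\
    eqHom (tens1l (dualo D X)) ∘ (ev D X ⊗ idm (dualo D X))
      ∘ eqHom (esym (tensA (dualo D X) X (dualo D X)))
      ∘ (idm (dualo D X) ⊗ coev D X) ∘ eqHom (esym (tens1r (dualo D X)))
      = idm (dualo D X).

Definition is_algebra (C : stcat) (A : C) (m : HomC C (tens A A) A) (eta : HomC C tunit A) : Prop :=
  [/\ m ∘ (idm A ⊗ m) ∘ eqHom (tensA A A A) = m ∘ (m ⊗ idm A),
      m ∘ (idm A ⊗ eta) ∘ eqHom (esym (tens1r A)) = idm A
    & m ∘ (eta ⊗ idm A) ∘ eqHom (esym (tens1l A)) = idm A].

Definition is_coalgebra (C : stcat) (A : C) (Delta : HomC C A (tens A A)) (eps : HomC C A tunit) : Prop :=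
  [/\ eqHom (tensA A A A) ∘ (Delta ⊗ idm A) ∘ Delta = (idm A ⊗ Delta) ∘ Delta,
      eqHom (tens1r A) ∘ (idm A ⊗ eps) ∘ Delta = idm A
    & eqHom (tens1l A) ∘ (eps ⊗ idm A) ∘ Delta = idm A].

Definition is_frobenius (C : stcat) (A : C) (m : HomC C (tens A A) A) (eta : HomC C tunit A)
    (Delta : HomC C A (tens A A)) (eps : HomC C A tunit) : Prop :=
  [/\ is_algebra m eta, is_coalgebra Delta eps,
      (idm A ⊗ m) ∘ eqHom (tensA A A A) ∘ (Delta ⊗ idm A) = Delta ∘ m
    & Delta ∘ m = (m ⊗ idm A) ∘ eqHom (esym (tensA A A A)) ∘ (idm A ⊗ Delta)].

Definition is_module (C : stcat) (A : C) (m : HomC C (tens A A) A) (eta : HomC C tunit A)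
    (M : C) (rho : HomC C (tens A M) M) : Prop :=
  rho ∘ (m ⊗ idm M) = rho ∘ (idm A ⊗ rho) ∘ eqHom (tensA A A M)
  /\ rho ∘ (eta ⊗ idm M) ∘ eqHom (esym (tens1l M)) = idm M.

Definition is_modhom (C : stcat) (A M N : C) (rhoM : HomC C (tens A M) M)
    (rhoN : HomC C (tens A N) N) (f : HomC C M N) : Prop :=
  f ∘ rhoM = rhoN ∘ (idm A ⊗ f).

Definition is_Aswap (C : stcat) (A : C) (m : HomC C (tens A A) A) (eta : HomC C tunit A)
    (c : forall X : C, HomC C (tens X A) (tens A X))
    (cinv : forall X : C, HomC C (tens A X) (tens X A)) : Prop :=
  [/\ (forall X : C, cinv X ∘ c X = idm (tens X A) /\ c X ∘ cinv X = idm (tens A X)),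
      (forall X : C,
         (m ⊗ idm X) ∘ eqHom (esym (tensA A A X)) ∘ (idm A ⊗ c X)
           ∘ eqHom (tensA A X A) ∘ (c X ⊗ idm A)
         = c X ∘ (idm X ⊗ m) ∘ eqHom (tensA X A A)),
      (forall X : C,
         c X ∘ (idm X ⊗ eta) ∘ eqHom (esym (tens1r X))
         = (eta ⊗ idm X) ∘ eqHom (esym (tens1l X))),
      (forall X Y : C,
         c (tens X Y)
         = eqHom (tensA A X Y) ∘ (c X ⊗ idm Y) ∘ eqHom (esym (tensA X A Y))
             ∘ (idm X ⊗ c Y) ∘ eqHom (tensA X Y A))
    & (forall (X Y : C) (f : HomC C X Y) (g : HomC C A A),
         c Y ∘ (f ⊗ g) = (g ⊗ f) ∘ c X)].

Definition swap_commutative (C : stcat) (A : C) (m : HomC C (tens A A) A)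
    (c : forall X : C, HomC C (tens X A) (tens A X)) : Prop :=
  m ∘ c A = m.

(* rho^wedge := (d ⊗ id) ∘ (id ⊗ rho ⊗ id) ∘ (cinv_{M^v} ⊗ b_M), with the
   strictness identifications made explicit. *)
Definition dual_act (C : stcat) (D : rduality C) (A : C)
    (cinv : forall X : C, HomC C (tens A X) (tens X A))
    (M : C) (rho : HomC C (tens A M) M) : HomC C (tens A (dualo D M)) (dualo D M) :=
  let Mv := dualo D M in
  eqHom (tens1l Mv) ∘ (ev D M ⊗ idm Mv) ∘ ((idm Mv ⊗ rho) ⊗ idm Mv)
    ∘ eqHom (eq_trans (esym (tensA (tens Mv A) M Mv))
                      (f_equal (fun Z => tens Z Mv) (tensA Mv A M)))
    ∘ (cinv Mv ⊗ coev D M) ∘ eqHom (esym (tens1r (tens A Mv))).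

Definition Phi (C : stcat) (D : rduality C) (A : C) (m : HomC C (tens A A) A)
    (eps : HomC C A tunit) : HomC C A (dualo D A) :=
  eqHom (tens1l (dualo D A)) ∘ (eps ⊗ idm (dualo D A)) ∘ (m ⊗ idm (dualo D A))
    ∘ eqHom (esym (tensA A A (dualo D A))) ∘ (idm A ⊗ coev D A)
    ∘ eqHom (esym (tens1r A)).

(* Main.v *)
Set Warnings "-notation-overridden,-ambiguous-paths".
Require Import Defs.
Set Warnings "-notation-overridden,-ambiguous-paths".
From mathcomp Require Import all_boot all_algebra.
From Stdlib Require Import ProofIrrelevance.
Set Implicit Arguments. Unset Strict Implicit.
Local Open Scope cat_scope.

Lemma cA (C : stcat) (HC : is_stcat C) (X Y Z W : C) (h : HomC C Z W) (g : HomC C Y Z) (f : HomC C X Y) :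
  h ∘ (g ∘ f) = h ∘ g ∘ f.
Proof. by case: HC => [[H _]] *; apply: H. Qed.
Lemma c1m (C : stcat) (HC : is_stcat C) (X Y : C) (f : HomC C X Y) : idm Y ∘ f = f.
Proof. by case: HC => [[_ H]] *; case: (H _ _ f). Qed.
Lemma cm1 (C : stcat) (HC : is_stcat C) (X Y : C) (f : HomC C X Y) : f ∘ idm X = f.
Proof. by case: HC => [[_ H]] *; case: (H _ _ f). Qed.
Lemma tM (C : stcat) (HC : is_stcat C) (X Y Z X' Y' Z' : C) (f : HomC C X Y) (g : HomC C Y Z)
   (f' : HomC C X' Y') (g' : HomC C Y' Z') : (g ∘ f) ⊗ (g' ∘ f') = (g ⊗ g') ∘ (f ⊗ f').
Proof. by case: HC => _ H *; apply: H. Qed.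
Lemma t11 (C : stcat) (HC : is_stcat C) (X Y : C) : idm X ⊗ idm Y = idm (tens X Y).
Proof. by case: HC => _ _ H *; apply: H. Qed.
Lemma natA (C : stcat) (HC : is_stcat C) (X X' Y Y' Z Z' : C) (f : HomC C X X') (g : HomC C Y Y') (h : HomC C Z Z') :
  eqHom (tensA X' Y' Z') ∘ ((f ⊗ g) ⊗ h) = (f ⊗ (g ⊗ h)) ∘ eqHom (tensA X Y Z).
Proof. by case: HC => _ _ _ H *; apply: H. Qed.
Lemma natl (C : stcat) (HC : is_stcat C) (X Y : C) (f : HomC C X Y) :
  eqHom (tens1l Y) ∘ (idm tunit ⊗ f) = f ∘ eqHom (tens1l X).
Proof. by case: HC => _ _ _ _ [H _] *; case: (H _ _ f). Qed.
Lemma natr (C : stcat) (HC : is_stcat C) (X Y : C) (f : HomC C X Y) :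
  eqHom (tens1r Y) ∘ (f ⊗ idm tunit) = f ∘ eqHom (tens1r X).
Proof. by case: HC => _ _ _ _ [H _] *; case: (H _ _ f). Qed.

Lemma eqH_pi (C : stcat) (X Y : C) (e1 e2 : X = Y) : eqHom e1 = eqHom e2.
Proof. by rewrite (proof_irrelevance _ e1 e2). Qed.
Lemma eqH_comp (C : stcat) (HC : is_stcat C) (X Y Z : C) (e1 : X = Y) (e2 : Y = Z) :
  eqHom e2 ∘ eqHom e1 = eqHom (eq_trans e1 e2).
Proof. case: Z / e2; rewrite /= c1m //; apply: eqH_pi. Qed.
Lemma eqH_tl (C : stcat) (HC : is_stcat C) (X Y W : C) (e : X = Y) :
  eqHom e ⊗ idm W = eqHom (f_equal (fun Z => tens Z W) e).
Proof. case: Y / e; by rewrite /= t11. Qed.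
Lemma eqH_tr (C : stcat) (HC : is_stcat C) (X Y W : C) (e : X = Y) :
  idm W ⊗ eqHom e = eqHom (f_equal (tens W) e).
Proof. case: Y / e; by rewrite /= t11. Qed.
Lemma eqH_inv (C : stcat) (HC : is_stcat C) (X Y : C) (e : X = Y) :
  eqHom (esym e) ∘ eqHom e = idm X.
Proof. case: Y / e; by rewrite /= c1m. Qed.
Lemma eqH_inv' (C : stcat) (HC : is_stcat C) (X Y : C) (e : X = Y) :
  eqHom e ∘ eqHom (esym e) = idm Y.
Proof. case: Y / e; by rewrite /= c1m. Qed.
Lemma eqH_refl (C : stcat) (X : C) (e : X = X) : eqHom e = idm X.
Proof. by rewrite (eqH_pi e erefl). Qed.

Lemma lk (C : stcat) (HC : is_stcat C) (X Y Z : C) (a : HomC C Y Z) (b : HomC C X Y) (r : HomC C X Z) :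
  a ∘ b = r -> forall W (k : HomC C Z W), k ∘ a ∘ b = k ∘ r.
Proof. by move=> H W k; rewrite -cA // H. Qed.
Lemma lk22 (C : stcat) (HC : is_stcat C) (X Y Y' Z : C) (a : HomC C Y Z) (b : HomC C X Y) (c : HomC C Y' Z) (d : HomC C X Y') :
  a ∘ b = c ∘ d -> forall W (k : HomC C Z W), k ∘ a ∘ b = k ∘ c ∘ d.
Proof. by move=> H W k; rewrite -!cA // H. Qed.
Lemma lk3 (C : stcat) (HC : is_stcat C) (X Y Z V : C) (a : HomC C Z V) (a' : HomC C Y Z) (b : HomC C X Y) (r : HomC C X V) :
  a ∘ a' ∘ b = r -> forall W (k : HomC C V W), k ∘ a ∘ a' ∘ b = k ∘ r.
Proof. by move=> H W k; rewrite -H !cA. Qed.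
Lemma eqH_split (C : stcat) (HC : is_stcat C) (X Y Z : C) (e : X = Z) (e1 : X = Y) (e2 : Y = Z) :
  eqHom e = eqHom e2 ∘ eqHom e1.
Proof. by rewrite eqH_comp //; apply: eqH_pi. Qed.
Lemma eqH_compk (C : stcat) (HC : is_stcat C) (X Y Z W : C) (e1 : X = Y) (e2 : Y = Z) (k : HomC C Z W) :
  k ∘ eqHom e2 ∘ eqHom e1 = k ∘ eqHom (eq_trans e1 e2).
Proof. by rewrite -cA // eqH_comp. Qed.
Lemma eqH_asr (C : stcat) (HC : is_stcat C) (W P Q : C) (e : tens W P = tens W Q) (e' : P = Q) :
  eqHom e = idm W ⊗ eqHom e'.
Proof. by rewrite eqH_tr //; apply: eqH_pi. Qed.
Lemma eqH_asl (C : stcat) (HC : is_stcat C) (W P Q : C) (e : tens P W = tens Q W) (e' : P = Q) :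
  eqHom e = eqHom e' ⊗ idm W.
Proof. by rewrite eqH_tl //; apply: eqH_pi. Qed.
Lemma tMl (C : stcat) (HC : is_stcat C) (X Y Z W : C) (f : HomC C X Y) (g : HomC C Y Z) :
  (g ∘ f) ⊗ idm W = (g ⊗ idm W) ∘ (f ⊗ idm W).
Proof. by rewrite -tM // c1m. Qed.
Lemma tMr (C : stcat) (HC : is_stcat C) (X Y Z W : C) (f : HomC C X Y) (g : HomC C Y Z) :
  idm W ⊗ (g ∘ f) = (idm W ⊗ g) ∘ (idm W ⊗ f).
Proof. by rewrite -tM // c1m. Qed.
Lemma xch1 (C : stcat) (HC : is_stcat C) (X X' Y Y' : C) (f : HomC C X X') (g : HomC C Y Y') :
  (f ⊗ idm Y') ∘ (idm X ⊗ g) = f ⊗ g.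
Proof. by rewrite -tM // c1m // cm1. Qed.
Lemma xch2 (C : stcat) (HC : is_stcat C) (X X' Y Y' : C) (f : HomC C X X') (g : HomC C Y Y') :
  (idm X' ⊗ g) ∘ (f ⊗ idm Y) = f ⊗ g.
Proof. by rewrite -tM // c1m // cm1. Qed.
Lemma natA' (C : stcat) (HC : is_stcat C) (X X' Y Y' Z Z' : C) (f : HomC C X X') (g : HomC C Y Y') (h : HomC C Z Z') :
  eqHom (esym (tensA X' Y' Z')) ∘ (f ⊗ (g ⊗ h)) = ((f ⊗ g) ⊗ h) ∘ eqHom (esym (tensA X Y Z)).
Proof.
rewrite -(c1m HC ((f ⊗ g) ⊗ h)) -(eqH_inv HC (tensA X' Y' Z')) -(cA HC _ (eqHom (tensA X' Y' Z'))) natA //.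
by rewrite -!cA // eqH_inv' // cm1.
Qed.
Lemma natAe (C : stcat) (HC : is_stcat C) (X X' Y Y' Z Z' : C) (f : HomC C X X') (g : HomC C Y Y') (h : HomC C Z Z') :
  (f ⊗ g) ⊗ h = eqHom (esym (tensA X' Y' Z')) ∘ (f ⊗ (g ⊗ h)) ∘ eqHom (tensA X Y Z).
Proof. by rewrite -cA // -natA // cA // eqH_inv // c1m. Qed.
Lemma zig1 (C : stcat) (HC : is_stcat C) (D : rduality C) (HD : is_rduality D) (A X : C)
  (e1 : tens (tens X A) tunit = tens X A)
  (e2 : tens (tens X (tens A (dualo D A))) A = tens (tens X A) (tens (dualo D A) A))
  (e3 : tens X A = tens (tens X tunit) A) :
  eqHom e1 ∘ (idm (tens X A) ⊗ ev D A) ∘ eqHom e2 ∘ ((idm X ⊗ coev D A) ⊗ idm A) ∘ eqHom e3 = idm (tens X A).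
Proof.
rewrite -{1}(t11 HC X A) (natAe HC (idm X) (idm A) (ev D A)) ?(cA HC) ?(eqH_comp HC) ?(eqH_compk HC).
rewrite (eqH_split HC _ (tensA X (tens A (dualo D A)) A) (f_equal (tens X) (tensA A (dualo D A) A))).
rewrite ?(cA HC) (lk22 HC (natA HC (idm X) (coev D A) (idm A))) ?(cA HC) ?(eqH_compk HC).
rewrite (eqH_asr HC _ (tens1r A)) (eqH_asr HC _ (esym (tens1l A))) -(eqH_tr HC) -!(tMr HC).
by rewrite (proj1 (HD A)) t11.
Qed.
Lemma zig1k (C : stcat) (HC : is_stcat C) (D : rduality C) (HD : is_rduality D) (A X W : C)
  (e1 : tens (tens X A) tunit = tens X A)
  (e2 : tens (tens X (tens A (dualo D A))) A = tens (tens X A) (tens (dualo D A) A))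
  (e3 : tens X A = tens (tens X tunit) A) (k : HomC C (tens X A) W) :
  k ∘ eqHom e1 ∘ (idm (tens X A) ⊗ ev D A) ∘ eqHom e2 ∘ ((idm X ⊗ coev D A) ⊗ idm A) ∘ eqHom e3 = k.
Proof. by rewrite -[RHS](cm1 HC k) -[X in _ = _ ∘ X](zig1 HC HD e1 e2 e3) !(cA HC). Qed.

Definition lam (C : stcat) (D : rduality C) (A X : C) (g : HomC C (tens X A) tunit) : HomC C X (dualo D A) :=
  eqHom (tens1l (dualo D A)) ∘ (g ⊗ idm (dualo D A)) ∘ eqHom (esym (tensA X A (dualo D A)))
    ∘ (idm X ⊗ coev D A) ∘ eqHom (esym (tens1r X)).

Lemma S1 (C : stcat) (HC : is_stcat C) (D : rduality C) (HD : is_rduality D) (A X : C)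
  (g : HomC C (tens X A) tunit) : ev D A ∘ (lam D g ⊗ idm A) = g.
Proof.
rewrite /lam !(tMl HC) !(eqH_tl HC) ?(cA HC).
rewrite (eqH_split HC _ (tensA tunit (dualo D A) A) (tens1l (tens (dualo D A) A))) ?(cA HC).
rewrite -(natl HC (ev D A)) ?(cA HC) (lk22 HC (natA HC g (idm _) (idm A))) ?(cA HC) (t11 HC (dualo D A) A).
rewrite (lk HC (xch2 HC g (ev D A))) -(xch1 HC g (ev D A)) ?(cA HC).
rewrite (eqH_pi (tens1l tunit) (tens1r tunit)) (natr HC g) ?(cA HC) ?(eqH_compk HC).
by rewrite (zig1k HC HD).
Qed.
Lemma natr' (C : stcat) (HC : is_stcat C) (X Y : C) (f : HomC C X Y) :
  (f ⊗ idm tunit) ∘ eqHom (esym (tens1r X)) = eqHom (esym (tens1r Y)) ∘ f.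
Proof.
rewrite -[LHS](c1m HC) -(eqH_inv HC (tens1r Y)) ?(cA HC) (lk22 HC (natr HC f)).
by rewrite -!(cA HC) eqH_inv' // cm1.
Qed.
Lemma S2 (C : stcat) (HC : is_stcat C) (D : rduality C) (HD : is_rduality D) (A X : C)
  (f : HomC C X (dualo D A)) : lam D (ev D A ∘ (f ⊗ idm A)) = f.
Proof.
rewrite /lam (tMl HC) ?(cA HC) -(lk22 HC (natA' HC f (idm A) (idm (dualo D A)))) ?(cA HC).
rewrite (t11 HC A (dualo D A)) (lk HC (xch1 HC f (coev D A))) -(xch2 HC f (coev D A)) ?(cA HC).
by rewrite (lk22 HC (natr' HC f)) ?(cA HC) (proj2 (HD A)) c1m.
Qed.
Lemma lamN (C : stcat) (HC : is_stcat C) (D : rduality C) (A X Y : C)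
  (g : HomC C (tens X A) tunit) (h : HomC C Y X) : lam D g ∘ h = lam D (g ∘ (h ⊗ idm A)).
Proof.
rewrite /lam -(lk22 HC (natr' HC h)) ?(cA HC) (lk HC (xch2 HC h (coev D A))) -(xch1 HC h (coev D A)) ?(cA HC).
rewrite -(t11 HC A (dualo D A)) (lk22 HC (natA' HC h (idm A) (idm (dualo D A)))) ?(cA HC).
by rewrite (lk HC (esym (tMl HC _ _ _))).
Qed.
Definition mu (C : stcat) (D : rduality C) (A : C) (u : HomC C tunit (tens A A)) : HomC C (dualo D A) A :=
  eqHom (tens1l A) ∘ (ev D A ⊗ idm A) ∘ eqHom (esym (tensA (dualo D A) A A))
    ∘ (idm (dualo D A) ⊗ u) ∘ eqHom (esym (tens1r (dualo D A))).
Lemma ML (C : stcat) (HC : is_stcat C) (D : rduality C) (HD : is_rduality D) (A X : C)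
  (u : HomC C tunit (tens A A)) (g : HomC C (tens X A) tunit) :
  mu D u ∘ lam D g = eqHom (tens1l A) ∘ (g ⊗ idm A) ∘ eqHom (esym (tensA X A A))
    ∘ (idm X ⊗ u) ∘ eqHom (esym (tens1r X)).
Proof.
rewrite /mu -(lk22 HC (natr' HC (lam D g))) ?(cA HC) (lk HC (xch2 HC (lam D g) u)) -(xch1 HC (lam D g) u) ?(cA HC).
rewrite -(t11 HC A A) (lk22 HC (natA' HC (lam D g) (idm A) (idm A))) ?(cA HC) (lk HC (esym (tMl HC _ _ _))).
by rewrite S1.
Qed.
Lemma S1' (C : stcat) (HC : is_stcat C) (D : rduality C) (A : C)
  (u : HomC C tunit (tens A A)) (g : HomC C (tens A A) tunit) :
  g ∘ (mu D u ⊗ idm A) = ev D A ∘ (idm (dualo D A) ⊗ (eqHom (tens1r A) ∘ (idm A ⊗ g)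
     ∘ eqHom (tensA A A A) ∘ (u ⊗ idm A) ∘ eqHom (esym (tens1l A)))).
Proof.
rewrite /mu !(tMl HC) !(eqH_tl HC) ?(cA HC).
rewrite (eqH_split HC _ (tensA tunit A A) (tens1l (tens A A))) ?(cA HC).
rewrite -(natl HC g) ?(cA HC) (lk22 HC (natA HC (ev D A) (idm A) (idm A))) ?(cA HC) (t11 HC A A).
rewrite (lk HC (xch2 HC (ev D A) g)) -(xch1 HC (ev D A) g) ?(cA HC).
rewrite (eqH_pi (tens1l tunit) (tens1r tunit)) (natr HC (ev D A)) ?(cA HC) ?(eqH_compk HC).
rewrite -{1}(t11 HC (dualo D A) A) (natAe HC (idm (dualo D A)) (idm A) g) ?(cA HC) ?(eqH_comp HC) ?(eqH_compk HC).
rewrite (eqH_split HC _ (tensA (dualo D A) (tens A A) A) (f_equal (tens (dualo D A)) (tensA A A A))).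
rewrite ?(cA HC) (lk22 HC (natA HC (idm (dualo D A)) u (idm A))) ?(cA HC) ?(eqH_compk HC).
rewrite (eqH_asr HC _ (tens1r A)) (eqH_asr HC _ (esym (tens1l A))) -(eqH_tr HC).
do 4 rewrite (lk HC (esym (tMr HC _ _ _))). by rewrite !(cA HC).
Qed.
Lemma eqH_mid (C : stcat) (X Y Z P Q : C) (e1 e2 : X = Y) (k : HomC C Y Z) (l1 : HomC C P X) (l2 : HomC C Q P) :
  k ∘ eqHom e1 ∘ l1 ∘ l2 = k ∘ eqHom e2 ∘ l1 ∘ l2.
Proof. by rewrite (eqH_pi e1 e2). Qed.
Theorem mainTheorem16 (C : stcat) (HC : is_stcat C) (Hab : is_abelian C)
    (Hk : tensor_k_additive C)
    (D : rduality C) (HD : is_rduality D)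
    (A : C) (m : HomC C (tens A A) A) (eta : HomC C tunit A)
    (Delta : HomC C A (tens A A)) (eps : HomC C A tunit)
    (HF : is_frobenius m eta Delta eps)
    (c : forall X : C, HomC C (tens X A) (tens A X))
    (cinv : forall X : C, HomC C (tens A X) (tens X A))
    (Hswap : is_Aswap m eta c cinv)
    (Hcomm : swap_commutative m c) :
  is_modhom m (dual_act D cinv m) (Phi D m eps) /\
  exists Psi : HomC C (dualo D A) A,
    is_modhom (dual_act D cinv m) m Psi /\
    Psi ∘ Phi D m eps = idm A /\
    Phi D m eps ∘ Psi = idm (dualo D A).
Proof.
case: HF => [[Halg1 Halg2 Halg3] [Hco1 Hco2 Hco3] Hfr1 Hfr2].
case: Hswap => Hinv Hmc Hunit Htens Hnat.
have Hc : m ∘ c A = m := Hcomm.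
have PhiE : Phi D m eps = lam D (eps ∘ m) by rewrite /Phi /lam (tMl HC) !(cA HC).
have PsiPhi : mu D (Delta ∘ eta) ∘ Phi D m eps = idm A.
  rewrite PhiE (ML HC HD) (tMl HC) (tMr HC) ?(cA HC) (lk3 HC (esym Hfr2)) ?(cA HC) Hco3 (c1m HC).
  exact: Halg2.
have PhiPsi : Phi D m eps ∘ mu D (Delta ∘ eta) = idm (dualo D A).
  rewrite PhiE (lamN HC) (S1' HC).
  have K : eqHom (tens1r A) ∘ (idm A ⊗ (eps ∘ m)) ∘ eqHom (tensA A A A) ∘ ((Delta ∘ eta) ⊗ idm A)
             ∘ eqHom (esym (tens1l A)) = idm A.
    rewrite (tMr HC) (tMl HC) ?(cA HC) (lk3 HC Hfr1) ?(cA HC) Hco2 (c1m HC).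
    exact: Halg3.
  by rewrite K (S2 HC HD).
have DA : dual_act D cinv m = lam D (ev D A ∘ (idm (dualo D A) ⊗ m) ∘ eqHom (tensA (dualo D A) A A)
                                   ∘ (cinv (dualo D A) ⊗ idm A)).
  rewrite /dual_act /lam !(tMl HC) (eqH_tl HC) ?(cA HC).
  rewrite -(lk22 HC (natA' HC (cinv _) (idm A) (idm _))) (t11 HC A (dualo D A)) (lk HC (xch1 HC _ _)) ?(cA HC) ?(eqH_compk HC).
  exact: eqH_mid.
have H1 : Phi D m eps ∘ m = dual_act D cinv m ∘ (idm A ⊗ Phi D m eps).
  rewrite DA PhiE !(lamN HC); apply: f_equal.
  have CN : cinv (dualo D A) ∘ (idm A ⊗ lam D (eps ∘ m)) = (lam D (eps ∘ m) ⊗ idm A) ∘ cinv A.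
    rewrite -[LHS](cm1 HC) -(proj2 (Hinv A)) ?(cA HC).
    rewrite -(lk22 HC (Hnat A (dualo D A) (lam D (eps ∘ m)) (idm A))) (proj1 (Hinv _)) (c1m HC) //.
  rewrite (lk HC (esym (tMl HC _ _ _))) CN (tMl HC) ?(cA HC).
  rewrite (lk22 HC (natA HC _ (idm A) (idm A))) (t11 HC A A) (lk HC (xch2 HC _ _)) -(xch1 HC (lam D _) m) ?(cA HC).
  rewrite (S1 HC HD) ?(cA HC) (lk3 HC Halg1) ?(cA HC) (lk HC (esym (tMl HC _ _ _))).
  have MC : m ∘ cinv A = m by rewrite -{1}Hc -(cA HC) (proj2 (Hinv A)) (cm1 HC).
  by rewrite MC.
split => //.
exists (mu D (Delta ∘ eta)); split => //.
rewrite /is_modhom -[LHS](cm1 HC) -(t11 HC A (dualo D A)) -[in LHS]PhiPsi (tMr HC).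
rewrite (cA HC (mu D (Delta ∘ eta) ∘ dual_act D cinv m)) -(cA HC (mu D (Delta ∘ eta)) (dual_act D cinv m)) -H1.
by rewrite (cA HC (mu D (Delta ∘ eta))) PsiPhi (c1m HC).
Qed.
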